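(* Let $G$, $D$, $F$, $E$, $\Lambda$ be as in the context. Let $M\subseteq\Lambda$ be a left ideal that is right generic with respect to $D$. Let $Y$ be a left $\Lambda$-module and $Z\subseteq Y$ a left $E[D]$-submodule such that $Y$ and $Z$ admit compatible rational structures (a left $\Lambda_F$-module $Y_F$ and an $F[D]$-submodule $Z_F\subseteq Y_F$ with $Y=Y_F\otimes_FE$, $Z=Z_F\otimes_FE$ compatibly with $Z\subseteq Y$), and suppose $Y$ admits an injective $\Lambda$-module homomorphism $Y\to\Lambda$. Then for every left ideal $N\subseteq\Lambda$ isomorphic to $M$ as a left $\Lambda$-module, $\dim\mathrm{Hom}_G(\Lambda/M,Y;Z)\le\dim\mathrm{Hom}_G(\Lambda/N,Y;Z)$.
   Context: $G$ is a finite group, $D\subseteq G$ a subgroup, $F$ a field of characteristic zero over which all irreducible representations of $G$ are defined, $E\supseteq F$, $\Lambda_F=F[G]$, $\Lambda=E[G]=\Lambda_F\otimes_FE$. A right rational $D$-subspace of $\Lambda$ is $V=V_F\otimes_FE$ with $V_F$ a right $F[D]$-submodule of $\Lambda_F$. A left ideal $M$ is right generic with respect to $D$ if $\dim(M\cap V)\le\dim(N\cap V)$ for all right rational $D$-subspaces $V$ and all left ideals $N\cong M$ as left $\Lambda$-modules. For a left ideal $M$, $\mathrm{Hom}_G(\Lambda/M,Y;Z)$ denotes the set of $G$-equivariant homomorphisms $\phi:\Lambda/M\to Y$ with $\phi([1]\bmod M)\in Z$. *)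

(* Defs.v *)
From HB Require Import structures.
From mathcomp Require Import all_boot all_order all_algebra all_fingroup all_character.
Set Implicit Arguments. Unset Strict Implicit. Unset Printing Implicit Defensive.
Import GRing.Theory.
Local Open Scope ring_scope.

(* The finite group G is the whole finGroupType gT.
   The group algebra R[G] is modelled as the space of row vectors 'rV[R]_#|gT|,
   the basis vector of index i standing for the group element enum_val i.
   Subspaces are row spaces of matrices (mxalgebra, scope %MS).
   Linear maps act on row vectors on the right: v |-> v *m A. *)

Section GroupAlgebra.
Variables (gT : finGroupType) (R : nzRingType).

Definition lmul (g : gT) : 'M[R]_#|gT| :=
  \matrix_(i, j) ((enum_val j == g * enum_val i)%g)%:R.

Definition rmul (g : gT) : 'M[R]_#|gT| :=
  \matrix_(i, j) ((enum_val j == enum_val i * g)%g)%:R.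

Definition idx1 : 'I_#|gT| := enum_rank (1%g : gT).

End GroupAlgebra.

Section Defs.
Variables (gT : finGroupType) (E : fieldType).
Local Notation n := #|gT|.

Definition left_ideal (M : 'M[E]_n) : Prop :=
  forall g : gT, (M *m lmul E g <= M)%MS.

Definition ideal_iso (M N : 'M[E]_n) : Prop :=
  exists f : 'M[E]_n,
    [/\ (M *m f == N)%MS, \rank (M *m f) = \rank M &
        forall g : gT, M *m lmul E g *m f = M *m f *m lmul E g].

(* right rational D-subspaces: V = V_F (x)_F E with V_F a right F[D]-submodule
   of F[G]; the rational structure comes from the field embedding iota. *)
Definition right_rational_sub (F : fieldType) (D : {set gT})
    (VF : 'M[F]_n) : Prop :=
  forall d, d \in D -> (VF *m rmul F d <= VF)%MS.

Definition right_generic (F : fieldType) (iota : {rmorphism F -> E})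
    (D : {set gT}) (M : 'M[E]_n) : Prop :=
  forall (VF : 'M[F]_n) (N : 'M[E]_n),
    right_rational_sub D VF -> left_ideal N -> ideal_iso M N ->
    (\rank (M :&: map_mx iota VF) <= \rank (N :&: map_mx iota VF))%N.

(* A left module structure on row vectors of length m:
   g . y := y *m rho g, so rho (g * h) = rho h *m rho g. *)
Definition is_left_rep (R : nzRingType) m (rho : gT -> 'M[R]_m) : Prop :=
  rho 1%g = 1%:M /\ forall g h, rho (g * h)%g = rho h *m rho g.

(* Hom_G(E[G]/M, Y; Z), with a homomorphism E[G]/M -> Y represented by its
   composite phi : E[G] -> Y with the projection (a linear map killing M). *)
Definition homG (M : 'M[E]_n) m (rho : gT -> 'M[E]_m) (Z : 'M[E]_m)
    (phi : 'M[E]_(n, m)) : Prop :=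
  [/\ M *m phi = 0,
      forall g, lmul E g *m phi = phi *m rho g &
      (row (idx1 gT) phi <= Z)%MS].

Definition homG_space (M : 'M[E]_n) m (rho : gT -> 'M[E]_m) (Z : 'M[E]_m)
    : 'M[E]_(n * m) :=
  (kermx (lin_mx (mulmx M))
   :&: (\bigcap_(g : gT) kermx (lin_mx (fun phi : 'M[E]_(n, m) =>
                                          lmul E g *m phi - phi *m rho g)))
   :&: kermx (lin_mx (fun phi : 'M[E]_(n, m) => row (idx1 gT) phi *m cokermx Z)))%MS.

Definition homG_dim (M : 'M[E]_n) m (rho : gT -> 'M[E]_m) (Z : 'M[E]_m) : nat :=
  \rank (homG_space M rho Z).

End Defs.

Lemma lin_mx_vecE (E : fieldType) m1 n1 m2 n2 (f : 'M[E]_(m1,n1) -> 'M[E]_(m2,n2))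
  (fL : forall a x y, f (a *: x + y) = a *: f x + f y) A :
  mxvec A *m lin_mx f = mxvec (f A).
Proof.
pose h := mxvec \o f \o vec_mx.
have hL : linear h.
  by move=> a x y; rewrite /h /= linearP fL linearP.
pose hh : {linear 'rV[E]_(m1 * n1) -> 'rV[E]_(m2 * n2)} :=
  HB.pack h (GRing.isLinear.Build _ _ _ _ h hL).
by rewrite /lin_mx (mul_rV_lin1 hh) /= /h /= mxvecK.
Qed.

Lemma homG_spaceP (gT : finGroupType) (E : fieldType) (M : 'M[E]_#|gT|) m
  (rho : gT -> 'M[E]_m) (Z : 'M[E]_m) (phi : 'M[E]_(#|gT|, m)) :
  (mxvec phi <= homG_space M rho Z)%MS <-> homG M rho Z phi.
Proof.
have e1 : (mxvec phi <= kermx (lin_mx (mulmx M)))%MS = (M *m phi == 0).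
  by rewrite sub_kermx lin_mx_vecE ?mxvec_eq0 // => a x y; rewrite mulmxDr scalemxAr.
have e2 : forall g, (mxvec phi <= kermx (lin_mx (fun phi : 'M[E]_(#|gT|, m) =>
             lmul E g *m phi - phi *m rho g)))%MS = (lmul E g *m phi == phi *m rho g).
  move=> g; rewrite sub_kermx lin_mx_vecE ?mxvec_eq0 ?subr_eq0 //.
  move=> a x y; rewrite mulmxDr mulmxDl -scalemxAr scalemxAl scalerBr.
  by rewrite ?scalemxAl opprD addrACA.
have e3 : (mxvec phi <= kermx (lin_mx (fun phi : 'M[E]_(#|gT|, m) =>
              row (idx1 gT) phi *m cokermx Z)))%MS = (row (idx1 gT) phi <= Z)%MS.
  rewrite sub_kermx lin_mx_vecE ?mxvec_eq0 -?submxE //.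
  by move=> a x y; rewrite linearP mulmxDl -scalemxAl.
rewrite /homG_space !sub_capmx e1 e3; split.
  case/andP=> /andP[/eqP HM /sub_bigcapmxP Hg] HZ; split => // g.
  by apply/eqP; rewrite -e2; apply: Hg.
case=> -> Hg ->; rewrite eqxx andbT /=; apply/sub_bigcapmxP => g _.
by rewrite e2 Hg.
Qed.

(* Main.v *)
Require Import Defs.
From HB Require Import structures.
From mathcomp Require Import all_boot all_order all_algebra all_fingroup all_character.
From Stdlib Require Import Classical.
Set Implicit Arguments. Unset Strict Implicit. Unset Printing Implicit Defensive.
Import GRing.Theory.
Local Open Scope ring_scope.

Lemma exists_nonroot (F E : fieldType) (iota : {rmorphism F -> E})
  (charF0 : [pchar F] =i pred0) (P : {poly E}) :
  P != 0 -> exists a : F, P.[iota a] != 0.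
Proof.
move=> P0; apply/not_all_not_ex => /= H.
pose rs := [seq iota i%:R | i <- seq.iota 0 (size P)].
have : (size rs < size P)%N.
  apply: max_poly_roots => //.
    by apply/allP => x /mapP [i _ ->]; apply/negPn/negP; apply: H.
  rewrite map_inj_uniq ?iota_uniq // => i j /fmorph_inj /eqP.
  have cf := (pcharf0P F).1 charF0.
  wlog le: i j / (i <= j)%N => [W|].
    by case: (leqP i j) => [/W W2 /W2 //|/ltnW /W W2]; rewrite eq_sym => /W2 ->.
  rewrite eq_sym -subr_eq0 -natrB // cf subn_eq0 => le2; apply/eqP.
  by rewrite eqn_leq le le2.
by rewrite size_map size_iota ltnn.
Qed.

Definition mixc (F E : fieldType) (iota : {rmorphism F -> E}) m (k : nat)
  (cF : 'cV[F]_m) (cE : 'cV[E]_m) : 'cV[E]_m :=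
  \col_i (if (i < k)%N then iota (cF i 0) else cE i 0).

Lemma det_line (E : fieldType) p (X Y : 'M[E]_p) (s : E) :
  exists P : {poly E}, forall t, P.[t] = \det (X + (t - s) *: Y).
Proof.
exists (\det (\matrix_(a, b) ((X a b)%:P + ('X - s%:P) * (Y a b)%:P))) => t.
rewrite -horner_evalE -det_map_mx; congr (\det _); apply/matrixP => a b.
by rewrite !mxE /= horner_evalE !hornerE.
Qed.

Lemma rational_point (F E : fieldType) (iota : {rmorphism F -> E})
  (charF0 : [pchar F] =i pred0) m p (L : 'cV[E]_m -> 'M[E]_p)
  (Llin : forall a c c', L (a *: c + c') = a *: L c + L c') c0 :
  \det (L c0) != 0 -> exists cF : 'cV[F]_m, \det (L (map_mx iota cF)) != 0.
Proof.
move=> H0.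
suff: forall k, exists cF, exists cE, \det (L (mixc iota k cF cE)) != 0.
  case/(_ m) => cF [cE H]; exists cF; congr (\det (L _) != 0): H.
  by apply/matrixP => i j; rewrite !mxE ltn_ord (ord1 j).
elim=> [|k [cF [cE IH]]].
  exists 0, c0; congr (\det (L _) != 0): H0.
  by apply/matrixP => i j; rewrite !mxE (ord1 j).
case: (ltnP k m) => km; last first.
  exists cF, cE; congr (\det (L _) != 0): IH.
  apply/matrixP => i j; rewrite !mxE.
  by have ik := leq_trans (ltn_ord i) km; rewrite ik ltnS (ltnW ik).
pose i0 : 'I_m := Ordinal km.
set c := mixc iota k cF cE in IH.
have [P HP] := det_line (L c) (L (delta_mx i0 0)) (c i0 0).
have P0 : P != 0.
  have e : P.[c i0 0] = \det (L c) by rewrite HP subrr scale0r addr0.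
  by apply: contraNneq IH => P0; rewrite -e P0 horner0.
have [a Ha] := exists_nonroot iota charF0 P0.
exists (\col_i (if i == i0 then a else cF i 0)), cE.
rewrite HP addrC -Llin in Ha; congr (\det (L _) != 0): Ha.
apply/matrixP => i j; rewrite (ord1 j) !mxE /= eqxx andbT.
case: (ltngtP i k) => ik.
- have -> : (i == i0) = false by rewrite -val_eqE /= ltn_eqF.
  by rewrite ltnS (ltnW ik) mulr0 add0r.
- have -> : (i == i0) = false by rewrite -val_eqE /= gtn_eqF.
  by rewrite [(i < k.+1)%N]ltnNge ik /= mulr0 add0r.
- have ei : i = i0 by apply: val_inj.
  by rewrite ei eqxx /= ltnSn ltnn mulr1 subrK.
Qed.
Lemma enum_val_eq (T : finType) (j : 'I_#|T|) (x : T) :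
  (enum_val j == x) = (j == enum_rank x).
Proof. by rewrite -(inj_eq enum_rank_inj) enum_valK. Qed.

Lemma row_lmul (gT : finGroupType) (R : nzRingType) p (g : gT) i
  (A : 'M[R]_(#|gT|, p)) :
  row i (lmul R g *m A) = row (enum_rank (g * enum_val i)%g) A.
Proof.
rewrite row_mul [RHS]rowE; congr (_ *m _); apply/rowP => b.
by rewrite !mxE enum_val_eq eqxx.
Qed.

Lemma row_rmul (gT : finGroupType) (R : nzRingType) p (g : gT) i
  (A : 'M[R]_(#|gT|, p)) :
  row i (rmul R g *m A) = row (enum_rank (enum_val i * g)%g) A.
Proof.
rewrite row_mul [RHS]rowE; congr (_ *m _); apply/rowP => b.
by rewrite !mxE enum_val_eq eqxx.
Qed.

Definition Tm (R : nzRingType) (gT : finGroupType) m (rho : gT -> 'M[R]_m)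
  (c : 'cV[R]_m) : 'M[R]_(m, #|gT|) :=
  \matrix_(k, i) (rho (enum_val i) *m c) k 0.

Definition Phi (R : nzRingType) (gT : finGroupType) m (rho : gT -> 'M[R]_m)
  (y : 'rV[R]_m) : 'M[R]_(#|gT|, m) :=
  \matrix_(i, k) (y *m rho (enum_val i)) 0 k.

Lemma Phi_row (R : nzRingType) (gT : finGroupType) m (rho : gT -> 'M[R]_m) y i :
  row i (Phi rho y) = y *m rho (enum_val i).
Proof. by apply/rowP => k; rewrite !mxE. Qed.

Lemma Phi_equiv (R : nzRingType) (gT : finGroupType) m (rho : gT -> 'M[R]_m)
  (Hrho : is_left_rep rho) y g :
  lmul R g *m Phi rho y = Phi rho y *m rho g.
Proof.
apply/row_matrixP => i; rewrite row_lmul row_mul !Phi_row enum_rankK.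
by rewrite Hrho.2 mulmxA.
Qed.

Lemma Phi_idx1 (R : nzRingType) (gT : finGroupType) m (rho : gT -> 'M[R]_m)
  (Hrho : is_left_rep rho) y : row (idx1 gT) (Phi rho y) = y.
Proof. by rewrite Phi_row /idx1 enum_rankK Hrho.1 mulmx1. Qed.

Lemma homG_Phi (gT : finGroupType) (E : fieldType) m (rho : gT -> 'M[E]_m)
  (Hrho : is_left_rep rho) M Z phi :
  homG M rho Z phi -> phi = Phi rho (row (idx1 gT) phi).
Proof.
case=> _ He _; apply/row_matrixP => i; rewrite Phi_row -row_mul -He row_lmul.
by rewrite /idx1 enum_rankK mulg1 enum_valK.
Qed.

Lemma Phi_c (R : comNzRingType) (gT : finGroupType) m (rho : gT -> 'M[R]_m) y c :
  Phi rho y *m c = (Tm rho c)^T *m y^T.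
Proof.
apply/matrixP => i j; rewrite (ord1 j) -trmx_mul [RHS]mxE.
transitivity ((y *m rho (enum_val i) *m c) 0 0).
  by rewrite !mxE; apply: eq_bigr => k _; rewrite !mxE.
by rewrite -mulmxA !mxE; apply: eq_bigr => k _; rewrite !mxE.
Qed.

Lemma mul_Tm (R : nzRingType) (gT : finGroupType) m (rho : gT -> 'M[R]_m) c p
  (A : 'M[R]_(p, m)) :
  A *m Tm rho c = \matrix_(r, i) ((A *m rho (enum_val i) *m c) r 0).
Proof.
apply/matrixP => r i; rewrite [RHS]mxE -mulmxA !mxE; apply: eq_bigr => k _.
by rewrite !mxE.
Qed.

Lemma col_Tm (R : nzRingType) (gT : finGroupType) m (rho : gT -> 'M[R]_m) c i :
  col i (Tm rho c) = rho (enum_val i) *m c.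
Proof. by apply/colP => k; rewrite !mxE. Qed.

Lemma rmul_Tm (R : comNzRingType) (gT : finGroupType) m (rho : gT -> 'M[R]_m)
  (Hrho : is_left_rep rho) c d :
  rmul R d *m (Tm rho c)^T = (Tm rho c)^T *m (rho d)^T.
Proof.
apply/row_matrixP => i; rewrite row_rmul row_mul.
rewrite -!tr_col -trmx_mul !col_Tm enum_rankK Hrho.2.
by rewrite mulmxA.
Qed.

Lemma Tm_lin (R : comNzRingType) (gT : finGroupType) m (rho : gT -> 'M[R]_m) a c c' :
  Tm rho (a *: c + c') = a *: Tm rho c + Tm rho c'.
Proof.
apply/matrixP => k i; rewrite !mxE mulr_sumr -big_split; apply: eq_bigr => j _.
by rewrite !mxE mulrDr mulrCA.
Qed.

Lemma map_Tm (F E : fieldType) (iota : {rmorphism F -> E}) (gT : finGroupType) m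
  (rho : gT -> 'M[F]_m) c :
  map_mx iota (Tm rho c) = Tm (fun g => map_mx iota (rho g)) (map_mx iota c).
Proof.
apply/matrixP => k i; rewrite !mxE rmorph_sum; apply: eq_bigr => j _.
by rewrite !mxE rmorphM.
Qed.

Lemma kerM (gT : finGroupType) (E : fieldType) m (rho : gT -> 'M[E]_m)
  (Hrho : is_left_rep rho) (M : 'M[E]_#|gT|) (HM : left_ideal M) c
  (Tfree : row_free (Tm rho c)) y :
  (M *m Phi rho y == 0) = (y <= kermx (Tm rho c *m M^T))%MS.
Proof.
rewrite sub_kermx.
have -> : y *m (Tm rho c *m M^T) = (M *m Phi rho y *m c)^T.
  by rewrite -mulmxA Phi_c !trmx_mul !trmxK mulmxA.
rewrite trmx_eq0; apply/eqP/eqP => [->|H]; first by rewrite mul0mx.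
have Hg : forall g, M *m Phi rho y *m rho g *m c = 0.
  move=> g; rewrite -(mulmxA M) -Phi_equiv // (mulmxA M).
  have /submxP [W ->] := HM g.
  by rewrite -!mulmxA (mulmxA M) H mulmx0.
apply: (row_free_inj Tfree); rewrite mul0mx mul_Tm; apply/matrixP => r i.
by rewrite [LHS]mxE Hg !mxE.
Qed.

Definition Phimat (E : fieldType) (gT : finGroupType) m (rho : gT -> 'M[E]_m) :
  'M[E]_(m, #|gT| * m) := lin1_mx (fun y => mxvec (Phi rho y)).

Lemma mul_Phimat (E : fieldType) (gT : finGroupType) m (rho : gT -> 'M[E]_m) y :
  y *m Phimat rho = mxvec (Phi rho y).
Proof.
pose h := fun y : 'rV[E]_m => mxvec (Phi rho y).
have hL : linear h.
  move=> a x z; rewrite /h -linearP; congr mxvec; apply/matrixP => i k.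
  rewrite !mxE mulr_sumr -big_split; apply: eq_bigr => j _.
  by rewrite !mxE mulrDl mulrA.
pose hh : {linear 'rV[E]_m -> 'rV[E]_(#|gT| * m)} :=
  HB.pack h (GRing.isLinear.Build _ _ _ _ h hL).
exact: (mul_rV_lin1 hh).
Qed.

Lemma Phimat_free (E : fieldType) (gT : finGroupType) m (rho : gT -> 'M[E]_m)
  (Hrho : is_left_rep rho) : row_free (Phimat rho).
Proof.
rewrite -kermx_eq0; apply/rowV0P => v /sub_kermxP; rewrite mul_Phimat.
by move/eqP; rewrite mxvec_eq0 => /eqP H; rewrite -(Phi_idx1 Hrho v) H row0.
Qed.

Lemma dim_eq (gT : finGroupType) (E : fieldType) m (rho : gT -> 'M[E]_m)
  (Hrho : is_left_rep rho) (M : 'M[E]_#|gT|) (HM : left_ideal M) c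
  (Tfree : row_free (Tm rho c)) (Z : 'M[E]_m) :
  homG_dim M rho Z = \rank (Z :&: kermx (Tm rho c *m M^T))%MS.
Proof.
set K := (Z :&: _)%MS.
have homK : forall y, (y <= K)%MS <-> homG M rho Z (Phi rho y).
  move=> y; rewrite sub_capmx -kerM // /homG Phi_idx1 //; split.
    by case/andP => yZ /eqP H; split => //; apply: Phi_equiv.
  by case=> H _ ->; rewrite H eqxx.
rewrite /homG_dim -(mxrankMfree K (Phimat_free Hrho)); apply: eqmx_rank.
apply/andP; split; apply/row_subP => i.
  have hp : homG M rho Z (vec_mx (row i (homG_space M rho Z))).
    by apply/homG_spaceP; rewrite vec_mxK row_sub.
  rewrite -[row i _]vec_mxK (homG_Phi Hrho hp) -mul_Phimat submxMr //.
  by apply/homK; rewrite -(homG_Phi Hrho hp).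
rewrite row_mul mul_Phimat; apply/homG_spaceP/homK; exact: row_sub.
Qed.

Lemma col_mulmx (R : nzRingType) m n p (i : 'I_p) (A : 'M[R]_(m, n)) (B : 'M[R]_(n, p)) :
  col i (A *m B) = A *m col i B.
Proof. by rewrite !colE mulmxA. Qed.

Lemma col_lmul (gT : finGroupType) (R : nzRingType) p (g : gT) i
  (A : 'M[R]_(p, #|gT|)) :
  col i (A *m lmul R g) = col (enum_rank (g^-1 * enum_val i)%g) A.
Proof.
rewrite col_mulmx [RHS]colE; congr (_ *m _); apply/colP => k.
rewrite !mxE eqxx andbT -enum_val_eq.
have -> : (enum_val i == (g * enum_val k)%g) = (enum_val k == (g^-1 * enum_val i)%g).
  by apply/eqP/eqP => [->|->]; rewrite ?mulKg ?mulKVg.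
by [].
Qed.

Lemma Tj_free (gT : finGroupType) (E : fieldType) m (rho : gT -> 'M[E]_m)
  (j : 'M[E]_(m, #|gT|)) (jfree : row_free j)
  (Hj : forall g, rho g *m j = j *m lmul E g) :
  row_free (Tm rho (col (idx1 gT) j)).
Proof.
rewrite -kermx_eq0; apply/rowV0P => y /sub_kermxP yT.
have e : forall i, (y *m Tm rho (col (idx1 gT) j)) 0 i
                   = (y *m j) 0 (enum_rank (enum_val i)^-1%g).
  move=> i; rewrite mul_Tm mxE -col_mulmx -mulmxA Hj mulmxA col_lmul.
  by rewrite /idx1 enum_rankK mulg1 mxE.
apply: (row_free_inj jfree); rewrite mul0mx; apply/rowP => l.
have := e (enum_rank (enum_val l)^-1%g); rewrite yT enum_rankK invgK enum_valK.
by rewrite !mxE => <-.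
Qed.

Unset Implicit Arguments.

Theorem lemmaA12 (gT : finGroupType) (D : {group gT}) (F E : fieldType)
  (iota : {rmorphism F -> E})
  (charF0 : [pchar F] =i pred0)
  (splitF : group_splitting_field F [set: gT]%G)
  (M : 'M[E]_#|gT|) (HM : left_ideal M) (Mgen : right_generic iota D M)
  (m : nat) (rhoF : gT -> 'M[F]_m) (HrhoF : is_left_rep rhoF)
  (ZF : 'M[F]_m) (HZF : forall d, d \in D -> (ZF *m rhoF d <= ZF)%MS)
  (Hemb : exists j : 'M[E]_(m, #|gT|),
            row_free j /\ forall g, map_mx iota (rhoF g) *m j = j *m lmul E g)
  (N : 'M[E]_#|gT|) (HN : left_ideal N) (HMN : ideal_iso M N) :
  (homG_dim M (fun g => map_mx iota (rhoF g)) (map_mx iota ZF)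
   <= homG_dim N (fun g => map_mx iota (rhoF g)) (map_mx iota ZF))%N.
Proof.
set rho := fun g => map_mx iota (rhoF g).
have Hrho : is_left_rep rho.
  by split => [|g h]; rewrite /rho ?HrhoF.1 ?HrhoF.2 ?map_mx1 ?map_mxM.
have [j [jfree Hj]] := Hemb.
have /row_freeP [B TB] := Tj_free jfree Hj.
have [cF HcF] : exists cF : 'cV[F]_m,
    \det (Tm rho (map_mx iota cF) *m B) != 0.
  apply: (@rational_point F E iota charF0 m m (fun c => Tm rho c *m B)
            _ (col (idx1 gT) j)).
    by move=> a c c'; rewrite Tm_lin mulmxDl scalemxAl.
  by rewrite TB det1 oner_neq0.
set T := Tm rho (map_mx iota cF).
have Tfree : row_free T.
  have u : (T *m B) \in unitmx by rewrite unitmxE unitfE.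
  rewrite /row_free eqn_leq rank_leq_row /= -{1}(mxrank_unit u).
  exact: mxrankM_maxl.
set TF := Tm rhoF cF.
have eT : T = map_mx iota TF by rewrite map_Tm.
set VF := kermx (TF^T *m ZF^T).
have eV : kermx (T^T *m (map_mx iota ZF)^T) = map_mx iota VF.
  by rewrite eT map_kermx map_mxM !map_trmx.
have HVF : right_rational_sub D VF.
  move=> d dD; apply/sub_kermxP.
  have /submxP [W eW] := HZF d dD.
  have e : rmul F d *m (TF^T *m ZF^T) = TF^T *m ZF^T *m W^T.
    by rewrite mulmxA rmul_Tm // -[LHS]mulmxA -trmx_mul eW trmx_mul [LHS]mulmxA.
  by rewrite -[VF *m _ *m _]mulmxA e mulmxA mulmx_ker mul0mx.
have key : forall X : 'M[E]_#|gT|, left_ideal X ->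
   (homG_dim X rho (map_mx iota ZF) + \rank X
     = \rank (map_mx iota ZF) + \rank (X :&: map_mx iota VF)%MS)%N.
  move=> X HX; rewrite (dim_eq Hrho HX Tfree).
  have e1 := mxrank_mul_ker (map_mx iota ZF) (T *m X^T).
  have e2 := mxrank_mul_ker X (T^T *m (map_mx iota ZF)^T).
  have e3 : \rank (map_mx iota ZF *m (T *m X^T))
          = \rank (X *m (T^T *m (map_mx iota ZF)^T)).
    by rewrite -mxrank_tr !trmx_mul trmxK mulmxA.
  rewrite eV in e2; rewrite -{}e1 -{}e2 e3.
  by rewrite addnCA addnA.
have rMN : \rank N = \rank M.
  by case: HMN => f [/eqmx_rank <- -> _].
have := Mgen VF N HVF HN HMN.
have kM := key M HM; have kN := key N HN; rewrite rMN in kN.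
rewrite -(leq_add2l (\rank (map_mx iota ZF))) -kM -kN leq_add2r.
by [].
Qed.
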